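(* Let $n,k$ be positive integers, $m=kn+1$, $\delta=\frac{(m-1)(n-1)}2$, let $\Delta$ be a zero-normalized $\Gamma_{m,n}$-semimodule and $D=D(\Delta)$. Then $\mathrm{bounce}(G_{kn+1}(D))=\delta-|D|$.
   Context: $\Gamma_{m,n}=\{am+bn:a,b\in\mathbb{Z}_{\ge0}\}$. A $\Gamma_{m,n}$-semimodule is $\Delta\subset\mathbb{Z}_{\ge0}$ with $\Delta+\Gamma_{m,n}\subset\Delta$; zero-normalized means $\min\Delta=0$. Label the box with lower-left corner $(x,y)$, $x,y\in\mathbb{Z}_{\ge0}$, of the positive quadrant by $mn-m(1+x)-n(1+y)$; $D(\Delta)$ is the set of boxes whose labels lie in $\Delta\setminus\Gamma_{m,n}$ (a Young diagram in the width-$m$, height-$n$ rectangle below its diagonal). Let $a_0<a_1<\dots<a_{m-1}$ be the $m$-generators of $\Delta$ (elements $a\in\Delta$ with $a-m\notin\Delta$) and $g(x)=\#(([x,x+n)\cap\mathbb{Z})\setminus\Delta)$; then $g(a_0)\ge\dots\ge g(a_{m-1})$, and $G_{kn+1}(D)$ is the Young diagram whose column heights are $g(a_0),\dots,g(a_{m-1})$ (columns indexed $0,\dots,m-1$ from west to east, drawn in the rectangle with southwest corner $(0,0)$). Loehr's bounce path of a diagram $E$ in this rectangle: start at $(x_0,y_0)=(0,n)$; for $i=0,1,2,\dots$, from $(x_i,y_i)$ step south to $(x_i,y_i')$ where $y_i'$ is the height of column $x_i$ of $E$ (so the path stays outside $E$; this is the vertical step $v_i=y_i-y_i'$), then step east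 by $h_i=v_i+v_{i-1}+\dots+v_{i-k+1}$ (omitting terms with negative index) to $(x_{i+1},y_{i+1})=(x_i+h_i,y_i')$; stop after the south step that reaches height $0$. Then $\mathrm{bounce}(E)$ is the sum of the heights $y_i'$ of all southwest corners reached, i.e. $\sum_i\big(n-\sum_{j\le i}v_j\big)$. *)

(* Defs.v *)
From mathcomp Require Import all_boot all_order all_algebra.
Set Implicit Arguments. Unset Strict Implicit. Unset Printing Implicit Defensive.
Import GRing.Theory Num.Theory.

Definition inGamma (m n z : nat) : bool :=
  [exists a : 'I_z.+1, exists b : 'I_z.+1, z == a * m + b * n].

Definition semimodule (m n : nat) (Delta : pred nat) : Prop :=
  forall x, Delta x -> forall a b, Delta (x + a * m + b * n).

(* a is an m-generator: a \in Delta and a - m \notin Delta (a - m < 0 counts as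
   not in Delta) *)
Definition mgen (m : nat) (Delta : pred nat) (a : nat) : bool :=
  Delta a && ~~ ((m <= a) && Delta (a - m)).

Definition gfun (n : nat) (Delta : pred nat) (x : nat) : nat :=
  count (fun y => ~~ Delta y) (iota x n).

(* label of the box with lower-left corner (x,y) *)
Definition label (m n x y : nat) : int :=
  (Posz (m * n) - Posz (m * (1 + x)) - Posz (n * (1 + y)))%R.

Definition inD (m n : nat) (Delta : pred nat) (x y : nat) : bool :=
  let l := label m n x y in
  (0 <= l)%R && Delta `|l|%N && ~~ inGamma m n `|l|%N.

(* |D(Delta)|.  Boxes with x >= n or y >= m have negative label, so counting
   over x, y < m*n (with m >= 2) counts all boxes of D(Delta). *)
Definition Dsize (m n : nat) (Delta : pred nat) : nat :=
  \sum_(x < m * n) \sum_(y < m * n) inD m n Delta x y.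

(* column heights of G_{kn+1}(D): column j (0 <= j < m) has height g(a_j),
   where a_0 < ... < a_{m-1} are the m-generators; columns j >= m are empty *)
Definition Gheight (m n : nat) (Delta : pred nat) (a : nat -> nat) (j : nat) : nat :=
  if j < m then gfun n Delta (a j) else 0.

(* Loehr's bounce path of a diagram with column heights h, starting at (0,n).
   State i = (x_i, y_i, [:: v_{i-1}; v_{i-2}; ...; v_0]). *)
Fixpoint bstate (h : nat -> nat) (n k i : nat) : nat * nat * seq nat :=
  match i with
  | 0 => (0, n, [::])
  | i'.+1 =>
      let: (x, y, vs) := bstate h n k i' in
      let y' := h x in
      let v := y - y' in
      (x + (v + sumn (take k.-1 vs)), y', v :: vs)
  end.

(* y_i' = height reached after the i-th south step = height of column x_i *)
Definition ypr (h : nat -> nat) (n k i : nat) : nat := h (bstate h n k i).1.1.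

(* bounce(E) = b : the path reaches height 0, and the sum of the heights y_i'
   of all corners up to (and including) the first one at height 0 is b.
   (Since the y_i' are nonincreasing, summing up to any N with y_N' = 0 gives
   the same value.) *)
Definition bounce_eq (h : nat -> nat) (n k : nat) (b : int) : Prop :=
  (exists N, ypr h n k N = 0) /\
  (forall N, ypr h n k N = 0 -> Posz (\sum_(i < N) ypr h n k i) = b).

(* Main.v *)
Require Import Defs.
Set Implicit Arguments. Unset Strict Implicit.
From mathcomp Require Import all_boot all_order all_algebra.
From mathcomp Require Import zify.
Import GRing.Theory Num.Theory.

Lemma semiD m n (D : pred nat) : semimodule m n D -> forall x a b, D x -> D (x + a * m + b * n).
Proof. by move=> sm x a b Dx; apply: sm. Qed.

Lemma gfun_le n D x : gfun n D x <= n.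
Proof. by rewrite /gfun; apply: leq_trans (count_size _ _) _; rewrite size_iota. Qed.

Lemma gfun_shift m n D x : semimodule m n D -> gfun n D (x + n) <= gfun n D x.
Proof.
move=> sm; rewrite /gfun addnC iotaDl count_map; apply: sub_count => z /=.
apply: contra => Dz; have := sm z Dz 0 1; rewrite mul0n addn0 mul1n addnC; done.
Qed.

Lemma gfun_step m n k D x : 0 < n -> m = k * n + 1 -> semimodule m n D ->
  D x -> gfun n D x = gfun n D x.+1.
Proof.
move=> n0 Hm sm Dx; rewrite /gfun.
have Dxn : D (x + n) by have := sm x Dx 0 1; rewrite mul0n addn0 mul1n.
case: n n0 Dxn {sm Hm} => // n _ Dxn.
have -> : iota x.+1 n.+1 = iota x.+1 n ++ [:: x.+1 + n] by rewrite -(addn1 n) iotaD.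
rewrite count_cat /= Dx addSn -addnS Dxn /=; lia.
Qed.

Definition W (D : pred nat) (L N : nat) := count D (iota (N - L) (N - (N - L))).

Lemma gencount m n k D N : 0 < n -> m = k * n + 1 -> semimodule m n D ->
  count (mgen m D) (iota 0 N.+1) = W D (k * n) N + D N.
Proof.
move=> n0 Hm sm; elim: N => [|N IH].
  by rewrite /W /= /mgen Hm addn1 ltn0 /=; case: (D 0).
rewrite -(addn1 N.+1) iotaD count_cat IH /= addn0 add0n.
rewrite /W; case: (ltnP N (k * n)) => hN.
  have -> : N.+1 - k * n = 0 by lia.
  have -> : N - k * n = 0 by lia.
  rewrite !subn0 -(addn1 N) iotaD count_cat /= add0n addn1.
  have -> : mgen m D N.+1 = D N.+1.
    have h : N.+1 < k * n + 1 by lia.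
    by rewrite /mgen Hm leqNgt h /= andbT.
  lia.
set lo := N - k * n.
have -> : N.+1 - k * n = lo.+1 by rewrite /lo; lia.
have -> : N.+1 - lo.+1 = k * n by rewrite /lo; lia.
have -> : N - lo = k * n by rewrite /lo; lia.
have e1 : count D (iota lo (k * n + 1)) = D lo + count D (iota lo.+1 (k * n)).
  by rewrite addnC /=.
have e2 : count D (iota lo (k * n + 1)) = count D (iota lo (k * n)) + D N.
  by rewrite iotaD count_cat /= addn0 /lo subnK.
have hg : mgen m D N.+1 = D N.+1 && ~~ D lo.
  rewrite /mgen Hm; have -> : (k * n + 1 <= N.+1) by lia.
  by have -> : N.+1 - (k * n + 1) = lo by rewrite /lo; lia.
have hl : D lo -> D N.+1.
  move=> Dl; have := sm lo Dl 1 0; rewrite mul1n mul0n addn0 Hm /lo; 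
  by have -> : N - k * n + (k * n + 1) = N.+1 by lia.
rewrite hg; move: e1 e2 hl; case: (D lo); case: (D N.+1); case: (D N) => /=; lia.
Qed.

Lemma amono m (a : nat -> nat) : (forall i j, i < j < m -> a i < a j) ->
  forall i j, i <= j < m -> a i <= a j.
Proof.
move=> ha i j /andP [hij hj]; rewrite leq_eqVlt in hij; case/orP: hij => [/eqP -> //|hij].
by apply: ltnW; apply: ha; rewrite hij hj.
Qed.

Lemma idxcount m D (a : nat -> nat) N : (forall i j, i < j < m -> a i < a j) ->
  (forall x, mgen m D x <-> exists2 j, j < m & a j = x) ->
  count (mgen m D) (iota 0 N.+1) = count (fun j => a j <= N) (iota 0 m).
Proof.
move=> ha hg; rewrite -!size_filter.
have -> : size [seq j <- iota 0 m | a j <= N] = size (map a [seq j <- iota 0 m | a j <= N]) by rewrite size_map.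
apply: perm_size; apply: uniq_perm.
- by apply: filter_uniq; apply: iota_uniq.
- rewrite map_inj_in_uniq; first by apply: filter_uniq; apply: iota_uniq.
  move=> i j; rewrite !mem_filter !mem_iota /= !add0n => /andP [_ hi] /andP [_ hj] e.
  case: (ltngtP i j) => // h.
  + by have := ha i j; rewrite h hj e ltnn => /(_ isT).
  + by have := ha j i; rewrite h hi e ltnn => /(_ isT).
move=> x; rewrite mem_filter mem_iota add0n /=.
apply/idP/idP.
- move=> /andP [/hg [j hj <-] hx]; apply/mapP; exists j => //.
  by rewrite mem_filter mem_iota add0n hj -ltnS hx.
- move=> /mapP [j]; rewrite mem_filter mem_iota add0n => /andP [hjN /= hj] ->.
  rewrite ltnS hjN andbT; apply/hg; by exists j.
Qed.

Lemma dc_count (P : pred nat) M : (forall i j, i <= j < M -> P j -> P i) ->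
  forall j, j < M -> P j = (j < count P (iota 0 M)).
Proof.
elim: M => [//|M IH] hdc j hj.
rewrite -(addn1 M) iotaD count_cat /= addn0 add0n.
have hdc' : forall i j, i <= j < M -> P j -> P i.
  move=> i j' /andP [h1 h2] Pj; apply: (hdc i j') => //; rewrite h1 /=; lia.
case PM: (P M).
- have hall : forall i, i < M -> P i.
    move=> i hi; apply: (hdc i M) => //; rewrite ltnW //=.
  have -> : count P (iota 0 M) = M.
    rewrite -[RHS](size_iota 0 M); apply/eqP; rewrite -all_count; apply/allP => i.
    by rewrite mem_iota add0n => /andP [_ /hall].
  rewrite addn1 hj; case: (ltngtP j M) => h; [exact: hall | lia | by rewrite h].
- have -> : count P (iota 0 M) + false = count P (iota 0 M) by rewrite addn0.
   case: (ltngtP j M) => hjM; first by apply: IH.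
  + lia.
  + subst j; rewrite PM; apply/esym/negbTE; rewrite -leqNgt.
    by apply: leq_trans (count_size _ _) _; rewrite size_iota.
Qed.

Lemma desc m n k D d N : 0 < n -> m = k * n + 1 -> semimodule m n D -> D N ->
  (forall z, N - d < z <= N -> ~~ mgen m D z) -> d <= N ->
  D (N - d) /\ gfun n D (N - d) = gfun n D N.
Proof.
move=> n0 Hm sm DN; elim: d => [|d IH] hz hd; first by rewrite subn0.
have [Dd gd] : D (N - d) /\ gfun n D (N - d) = gfun n D N.
  apply: IH; last by lia.
  by move=> z /andP [h1 h2]; apply: hz; rewrite h2 andbT; lia.
have := hz (N - d); rewrite /mgen Dd /=.
have -> : N - d.+1 < N - d <= N by apply/andP; split; lia.
move=> /(_ isT) /negbNE /andP [hmN Dm].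
have Dd1 : D (N - d.+1).
  have := sm _ Dm 0 k; rewrite mul0n addn0.
  by have -> : N - d - m + k * n = N - d.+1 by lia.
split => //; rewrite -gd.
have -> : N - d = (N - d.+1).+1 by lia.
exact: (gfun_step n0 Hm sm Dd1).
Qed.

Lemma keylem m n k D (a : nat -> nat) N : 0 < n -> m = k * n + 1 -> semimodule m n D ->
  (forall i j, i < j < m -> a i < a j) ->
  (forall x, mgen m D x <-> exists2 j, j < m & a j = x) ->
  D N -> W D (k * n) N < m /\ gfun n D (a (W D (k * n) N)) = gfun n D N.
Proof.
move=> n0 Hm sm ha hg DN.
set s := W D (k * n) N.
set t := count (fun j => a j <= N) (iota 0 m).
have ht : t = s.+1 by rewrite /t -(idxcount _ ha hg) (gencount _ n0 Hm sm) DN addn1.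
have htm : t <= m by rewrite /t; apply: leq_trans (count_size _ _) _; rewrite size_iota.
have hsm : s < m by rewrite -ht.
split => //.
have hdc : forall i j, i <= j < m -> a j <= N -> a i <= N.
  by move=> i j hij hj; apply: leq_trans hj; apply: (amono ha).
have hsN : a s <= N by rewrite (dc_count hdc hsm) -/t ht.
have HZ : forall z, N - (N - a s) < z <= N -> ~~ mgen m D z.
  move=> z /andP [h1 h2]; apply/negP => /hg [j hj ez].
  have Pj : a j <= N by rewrite ez.
  rewrite (dc_count hdc hj) -/t ht ltnS in Pj.
  have := amono ha (i:=j) (j:=s); rewrite Pj hsm => /(_ isT); lia.
have [_ gE] := desc (d:=N - a s) n0 Hm sm DN HZ (leq_subr _ _).
by move: gE; have -> : N - (N - a s) = a s by lia.
Qed.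

Definition cc n D j := if j is j'.+1 then gfun n D (j' * n) else n.

Lemma cc_step m n D j : semimodule m n D -> cc n D j.+1 <= cc n D j.
Proof.
move=> sm; case: j => [|j] /=; first exact: gfun_le.
by rewrite mulSn addnC; apply: gfun_shift sm.
Qed.

Lemma cc_mono m n D j j' : semimodule m n D -> j <= j' -> cc n D j' <= cc n D j.
Proof.
move=> sm; elim: j' => [|j' IH]; first by rewrite leqn0 => /eqP ->.
rewrite leq_eqVlt => /orP [/eqP -> //|]; rewrite ltnS => /IH h.
exact: leq_trans (cc_step j' sm) h.
Qed.

Lemma rev_iotaS i : rev (iota 0 i.+1) = i :: rev (iota 0 i).
Proof. by rewrite -(addn1 i) iotaD rev_cat. Qed.

Lemma take_sum m n D i l : semimodule m n D ->
  sumn (take l [seq cc n D j - cc n D j.+1 | j <- rev (iota 0 i)]) = cc n D (i - l) - cc n D i.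
Proof.
move=> sm; elim: i l => [|i IH] l; first by rewrite /= subnn.
rewrite rev_iotaS; case: l => [|l]; first by rewrite /= subnn.
rewrite /= IH subSS.
have h1 := cc_step i sm.
have h2 := cc_mono sm (leq_subr l i).
simpl in h1.
lia.
Qed.

Lemma cnt_g n D x : count D (iota x n) + gfun n D x = n.
Proof. by rewrite /gfun; have := count_predC D (iota x n); rewrite size_iota. Qed.

Lemma W_step m n k D i : semimodule m n D ->
  W D (k * n) (i.+1 * n) = W D (k * n) (i * n) + (cc n D (i.+1 - k) - cc n D i.+1).
Proof.
move=> sm; rewrite /W mulSnr.
set A := i * n; set K := k * n.
case: (ltnP i k) => hik.
  have hKA : A + n <= K by rewrite /A /K -mulSnr leq_mul.
  have -> : i.+1 - k = 0 by lia.
  have -> : A + n - K = 0 by lia.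
  have -> : A - K = 0 by lia.
  rewrite !subn0 iotaD count_cat /=.
  rewrite add0n; have := cnt_g n D A; rewrite /A; lia.
have hKA : K <= A by rewrite /A /K leq_mul.
have -> : i.+1 - k = (i - k).+1 by lia.
rewrite /= mulnBl -/A -/K.
have -> : A + n - K = A - K + n by lia.
have -> : A + n - (A - K + n) = K by lia.
have -> : A - (A - K) = K by lia.
have e1 : count D (iota (A - K) (n + K)) = count D (iota (A - K) n) + count D (iota (A - K + n) K).
  by rewrite iotaD count_cat.
have e2 : count D (iota (A - K) (K + n)) = count D (iota (A - K) K) + count D (iota A n).
  by rewrite iotaD count_cat; have -> : A - K + K = A by lia.
have hm : gfun n D A <= gfun n D (A - K).
  have := cc_mono sm (leq_subr k i : (i - k).+1 <= i.+1); rewrite /= mulnBl.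
  by [].
have := cnt_g n D A; have := cnt_g n D (A - K).
rewrite addnC in e2; lia.
Qed.

Lemma hW m n k D (a : nat -> nat) i : 0 < n -> m = k * n + 1 -> semimodule m n D ->
  (forall i j, i < j < m -> a i < a j) ->
  (forall x, mgen m D x <-> exists2 j, j < m & a j = x) -> D 0 ->
  Gheight m n D a (W D (k * n) (i * n)) = gfun n D (i * n).
Proof.
move=> n0 Hm sm ha hg D0.
have Di : D (i * n) by have := sm 0 D0 0 i; rewrite mul0n.
have [h1 h2] := keylem n0 Hm sm ha hg Di.
by rewrite /Gheight h1.
Qed.

Lemma path_inv m n k D (a : nat -> nat) i : 0 < n -> 0 < k -> m = k * n + 1 -> semimodule m n D ->
  (forall i j, i < j < m -> a i < a j) ->
  (forall x, mgen m D x <-> exists2 j, j < m & a j = x) -> D 0 ->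
  bstate (Gheight m n D a) n k i =
  (W D (k * n) (i * n), cc n D i, [seq cc n D j - cc n D j.+1 | j <- rev (iota 0 i)]).
Proof.
move=> n0 k0 Hm sm ha hg D0; elim: i => [|i IH].
  by rewrite /= /W mul0n sub0n.
rewrite /= IH /= (hW i n0 Hm sm ha hg D0) (take_sum _ _ sm) rev_iotaS /=.
rewrite (W_step _ _ sm).
rewrite (_ : i - k.-1 = i.+1 - k); last by lia.
have h1 := cc_step i sm; have h2 := cc_mono sm (leq_subr k.-1 i).
have e : i - k.-1 = i.+1 - k by lia.
rewrite e in h2.
simpl in h1.
congr (_, _, _); rewrite [cc n D i.+1]/=; lia.
Qed.

Lemma count_sum (P : pred nat) x n : count P (iota x n) = \sum_(0 <= r < n) P (x + r).
Proof.
elim: n => [|n IH]; first by rewrite big_geq.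
by rewrite -(addn1 n) iotaD count_cat IH addn1 big_nat_recr //= addn0.
Qed.

Lemma sum_ext (F : nat -> nat) A C : (forall i, A <= i -> F i = 0) ->
  \sum_(0 <= i < A + C) F i = \sum_(0 <= i < A) F i.
Proof.
move=> hF; rewrite (big_cat_nat (n:=A)) ?leq_addr //=.
rewrite [X in _ + X]big1_seq ?addn0 // => i; rewrite mem_index_iota => /andP [_ /andP [h _]].
exact: hF.
Qed.

Lemma Dqr m n k D q r : m = k * n + 1 -> semimodule m n D -> D 0 ->
  r * k <= q -> D (q * n + r).
Proof.
move=> Hm sm D0 h; have := sm 0 D0 r (q - r * k).
have e1 : r * m = r * k * n + r by rewrite Hm mulnDr muln1 mulnA.
have e2 : (q - r * k) * n = q * n - r * k * n by rewrite mulnBl.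
have e3 : r * k * n <= q * n by rewrite leq_mul2r h orbT.
by rewrite e1 e2 add0n; have -> : r * k * n + r + (q * n - r * k * n) = q * n + r by lia.
Qed.

Lemma Dlarge m n k D z : 0 < n -> m = k * n + 1 -> semimodule m n D -> D 0 ->
  m * n <= z -> D z.
Proof.
move=> n0 Hm sm D0 hz; rewrite (divn_eq z n); apply: (Dqr Hm sm D0).
have hr : z %% n < n by rewrite ltn_pmod.
have hq : m <= z %/ n by rewrite leq_divRL.
have : z %% n * k <= n * k by rewrite leq_mul2r ltnW ?orbT.
rewrite Hm in hq; lia.
Qed.

Lemma gfun0 n D x r : gfun n D x = 0 -> r < n -> D (x + r).
Proof.
rewrite /gfun => /eqP; rewrite -leqn0 leqNgt -has_count => /hasPn h hr.
have := h (x + r); rewrite mem_iota leq_addr /= ltn_add2l hr => /(_ isT).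
by rewrite negbK.
Qed.

Lemma gfun_zero m n k D x : 0 < n -> m = k * n + 1 -> semimodule m n D -> D 0 ->
  m * n <= x -> gfun n D x = 0.
Proof.
move=> n0 Hm sm D0 hx; rewrite /gfun; apply/eqP; rewrite -leqn0 leqNgt -has_count.
apply/hasPn => z; rewrite mem_iota => /andP [h _]; rewrite negbK.
apply: (Dlarge n0 Hm sm D0); exact: leq_trans hx h.
Qed.

Lemma inD_nat m n D x y : inD m n D x y =
  [&& m * (1 + x) + n * (1 + y) <= m * n, D (m * n - (m * (1 + x) + n * (1 + y)))
    & ~~ inGamma m n (m * n - (m * (1 + x) + n * (1 + y)))].
Proof.
rewrite /inD /label.
set S := m * (1 + x) + n * (1 + y).
have -> : (Posz (m * n) - Posz (m * (1 + x)) - Posz (n * (1 + y)))%R = (Posz (m * n) - Posz S)%R.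
  by rewrite /S PoszD opprD addrA.
case: (leqP S (m * n)) => h.
  by rewrite subzn // andbA.
have -> : (0 <= Posz (m * n) - Posz S)%R = false.
  by rewrite subr_ge0 lez_nat leqNgt h.
by [].
Qed.

Lemma notGamma m n k q r : 0 < n -> m = k * n + 1 -> r < n -> q < r * k -> ~~ inGamma m n (q * n + r).
Proof.
move=> n0 Hm hr hq; apply/negP; rewrite /inGamma => /existsP [a0 /existsP [b0 /eqP]].
move: (nat_of_ord a0) (nat_of_ord b0) => a b e.
have ha : r = a %% n.
  have := congr1 (modn^~ n) e.
  rewrite Hm mulnDr muln1 mulnA.
  have -> : a * k * n + a + b * n = (a * k + b) * n + a by rewrite mulnDl; lia.
  by rewrite !modnMDl modn_small.
have har : r <= a by rewrite ha leq_mod.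
have h1 : r * m <= a * m by rewrite leq_mul2r har orbT.
have h2 : q * n < r * k * n by rewrite ltn_mul2r n0 hq.
have h3 : r * m = r * k * n + r by rewrite Hm mulnDr muln1 mulnA.
lia.
Qed.

Lemma ar1 m n x y : 0 < m -> n <= x -> m * n < m * (1 + x) + n * (1 + y).
Proof.
move=> m0 hx; have : m * (1 + n) <= m * (1 + x) by rewrite leq_mul2l; lia.
rewrite mulnDr muln1; lia.
Qed.

Lemma ar2 m n k r y : m = k * n + 1 -> r < n -> r * k <= y ->
  m * n < m * (1 + (n - r.+1)) + n * (1 + y).
Proof.
move=> Hm hr hy.
have e1 : 1 + (n - r.+1) = n - r by lia.
have e2 : m * (n - r) = m * n - m * r by rewrite mulnBr.
have e3 : m * r = n * (r * k) + r by rewrite Hm; nia.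
have e4 : m * r <= m * n by rewrite leq_mul2l ltnW ?orbT.
have e5 : n * (1 + r * k) <= n * (1 + y) by rewrite leq_mul2l; lia.
rewrite mulnDr muln1 in e5.
rewrite e1 e2; lia.
Qed.

Lemma ar3 m n k r q : m = k * n + 1 -> r < n -> q < r * k ->
  let S := m * (1 + (n - r.+1)) + n * (1 + (r * k - q.+1)) in
  S <= m * n /\ m * n - S = q * n + r.
Proof.
move=> Hm hr hq S.
have e1 : 1 + (n - r.+1) = n - r by lia.
have e1' : 1 + (r * k - q.+1) = r * k - q by lia.
have e2 : m * (n - r) = m * n - m * r by rewrite mulnBr.
have e2' : n * (r * k - q) = n * (r * k) - n * q by rewrite mulnBr.
have e3 : m * r = n * (r * k) + r by rewrite Hm; nia.
have e4 : m * r <= m * n by rewrite leq_mul2l ltnW ?orbT.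
have e5 : n * q <= n * (r * k) by rewrite leq_mul2l ltnW ?orbT.
rewrite /S e1 e1' e2 e2' [q * n]mulnC; lia.
Qed.

Lemma ord_sum N (F : nat -> nat) : \sum_(i < N) F i = \sum_(0 <= i < N) F i.
Proof. by rewrite big_mkord. Qed.

Lemma Dsize_eq m n k D : 0 < n -> m = k * n + 1 ->
  Dsize m n D = \sum_(0 <= r < n) \sum_(0 <= q < r * k) D (q * n + r).
Proof.
move=> n0 Hm.
have m0 : 0 < m by rewrite Hm addn1.
rewrite /Dsize (ord_sum (m * n) (fun x => \sum_(y < m * n) (inD m n D x y : nat))).
rewrite (eq_big_nat _ _ (F2 := fun x => \sum_(0 <= y < m * n) (inD m n D x y : nat))); last first.
  by move=> x _; rewrite (ord_sum (m * n) (fun y => (inD m n D x y : nat))).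
rewrite (big_cat_nat (n:=n)) //=; last by rewrite leq_pmull.
rewrite [X in _ + X]big1_seq ?addn0; last first.
  move=> x; rewrite mem_index_iota => /andP [_ /andP [hx _]].
  apply: big1_seq => y _; rewrite inD_nat.
  by have := ar1 y m0 hx; rewrite ltnNge => /negbTE ->.
rewrite big_nat_rev /=; apply: eq_big_nat => r /andP [_ hr].
rewrite add0n.
have hrk : r * k <= m * n.
  have : r * k <= n * k by rewrite leq_mul2r ltnW ?orbT.
  have : m <= m * n by rewrite leq_pmulr.
  rewrite Hm; lia.
rewrite (big_cat_nat (n:=r * k)) //=.
rewrite [X in _ + X]big1_seq ?addn0; last first.
  move=> y; rewrite mem_index_iota => /andP [_ /andP [hy _]].
  by rewrite inD_nat; have := ar2 Hm hr hy; rewrite ltnNge => /negbTE ->.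
rewrite big_nat_rev /=; apply: eq_big_nat => q /andP [_ hq].
rewrite add0n inD_nat.
have [h1 h2] := ar3 Hm hr hq.
by rewrite h1 h2 (notGamma n0 Hm hr hq) andbT.
Qed.

Lemma ysum m n k D N : 0 < n -> m = k * n + 1 -> semimodule m n D -> D 0 ->
  gfun n D (N * n) = 0 ->
  \sum_(0 <= i < N) gfun n D (i * n) = \sum_(0 <= r < n) \sum_(0 <= q < r * k) (~~ D (q * n + r) : nat).
Proof.
move=> n0 Hm sm D0 hN.
rewrite (eq_big_nat _ _ (F2 := fun i => \sum_(0 <= r < n) (~~ D (i * n + r) : nat))); last first.
  by move=> i _; rewrite /gfun count_sum.
rewrite exchange_big_nat; apply: eq_big_nat => r /andP [_ hr].
have hA : forall i, N <= i -> (~~ D (i * n + r) : nat) = 0.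
  move=> i hi; have := cc_mono sm (_ : N.+1 <= i.+1); rewrite /= hN leqn0 => /(_ hi) /eqP g0.
  by rewrite (gfun0 g0 hr).
have hB : forall i, r * k <= i -> (~~ D (i * n + r) : nat) = 0.
  by move=> i hi; rewrite (Dqr Hm sm D0 hi).
by rewrite -(sum_ext (r * k) hA) -(sum_ext N hB) addnC.
Qed.

Lemma tri n k : 2 * \sum_(0 <= r < n) r * k = k * n * n.-1.
Proof.
elim: n => [|n IH]; first by rewrite big_geq // !muln0.
rewrite big_nat_recr //= mulnDr IH; case: n IH => [|n] IH /=; nia.
Qed.

Theorem mainTheorem17 (n k m : nat) (Delta : pred nat) (a : nat -> nat) :
  0 < n -> 0 < k -> m = k * n + 1 ->
  semimodule m n Delta -> Delta 0 ->
  (forall i j, i < j < m -> a i < a j) ->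
  (forall x, mgen m Delta x <-> exists2 j, j < m & a j = x) ->
  bounce_eq (Gheight m n Delta a) n k
    (Posz ((m.-1 * n.-1) %/ 2) - Posz (Dsize m n Delta))%R.
Proof.
move=> n0 k0 Hm sm D0 ha hg.
have yp : forall i, ypr (Gheight m n Delta a) n k i = gfun n Delta (i * n).
  by move=> i; rewrite /ypr (path_inv i n0 k0 Hm sm ha hg D0) /= (hW i n0 Hm sm ha hg D0).
split.
  by exists m; rewrite yp (gfun_zero n0 Hm sm D0).
move=> N; rewrite yp => hN.
rewrite (ord_sum N (fun i => ypr (Gheight m n Delta a) n k i)).
rewrite (eq_big_nat _ _ (F2 := fun i => gfun n Delta (i * n))); last by move=> i _; rewrite yp.
rewrite (ysum n0 Hm sm D0 hN) (Dsize_eq _ n0 Hm).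
set Gp := \sum_(0 <= r < n) _.
set Dp := \sum_(0 <= r < n) _.
have e : Gp + Dp = \sum_(0 <= r < n) r * k.
  rewrite /Gp /Dp -big_split /=; apply: eq_big_nat => r _.
  rewrite -big_split /= (eq_big_nat _ _ (F2 := fun _ => 1)); last by move=> q _; case: (Delta _).
  by rewrite sum_nat_const_nat subn0 muln1.
have e2 : (m.-1 * n.-1) %/ 2 = Gp + Dp.
  by rewrite e Hm addn1 /= -tri mulKn.
by rewrite e2 PoszD addrK.
Qed.
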